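(* Let $\widehat{\mathbf M}\otimes\mathcal A_\psi$ be the product of a gMDP $\widehat{\mathbf M}$ (state space $\hat{\mathbb X}$, input space $\hat{\mathbb U}$) with the DFA $\mathcal A_\psi=(Q,q_0,\Sigma,F,\tau)$, and let $\delta>0$. Let $V^*_\infty:=\lim_{l\to\infty}(\mathbf T^*_\delta)^l(V_0)$ with $V_0=0$. Let $\mu^*:\hat{\mathbb X}\times Q\to\mathcal P(\hat{\mathbb U})$ be a universally measurable map with $\mu^*\in\arg\sup_\mu\mathbf T^\mu_\delta(V^*_\infty)$, i.e. $\mathbf T^{\mu^*}_\delta(V^*_\infty)=\mathbf T^*_\delta(V^*_\infty)$. Then the stationary Markov policy $(\mu^*,\mu^*,\dots)$ is an optimal $(0,\delta)$-robust policy in the sense that $$V^*_\infty=\lim_{l\to\infty}(\mathbf T^{\mu^*}_\delta)^l(V_0),\qquad V_0=0.$$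
   Context: A gMDP is a tuple $\widehat{\mathbf M}=(\hat{\mathbb X},\hat{\mathbb U},\mathbb Y,\hat x_0,\hat{\mathbf t},\hat h)$ with Polish state space $\hat{\mathbb X}$, Polish input space $\hat{\mathbb U}$, metric output space $(\mathbb Y,\mathbf d_{\mathbb Y})$, initial state $\hat x_0$, stochastic kernel $\hat{\mathbf t}(\cdot\mid\hat x,\hat u)$ on $\hat{\mathbb X}$, and measurable output map $\hat h$. $\mathsf{AP}$ is a finite set of atomic propositions, $\Sigma=2^{\mathsf{AP}}$, $\mathsf L:\mathbb Y\to\Sigma$ a measurable labelling function; $\psi$ is an scLTL formula and $\mathcal A_\psi=(Q,q_0,\Sigma,F,\tau)$ a deterministic finite automaton (finite $Q$, accepting set $F$, transition $\tau:Q\times\Sigma\to Q$) accepting exactly the words satisfying $\psi$. The product $\widehat{\mathbf M}\otimes\mathcal A_\psi$ has states $\hat{\mathbb X}\times Q$, inputs $\hat{\mathbb U}$, and kernel $\bar{\mathbf t}(d\hat x'\times\{q'\}\mid\hat x,q,u)=\mathbf 1_{\{q'\}}(\tau(q,\mathsf L(\hat h(\hat x'))))\,\hat{\mathbf t}(d\hat x'\mid\hat x,u)$. For a universally measurable $\mu:\hat{\mathbb X}\times Q\to\mathcal P(\hat{\mathbb U})$ and $V:\hat{\mathbb X}\times Q\to[0,1]$: $\mathbf T^\mu(V)(\hat x,q)=\int\max\{\mathbf 1_F(q'),V(\hat x',q')\}\,\bar{\mathbf t}(d\hat x'\times\{q'\}\mid\hat x,q,\mu(\hat x,q))$; $\mathbf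 T^\mu_\delta(V)=\mathbf L(\mathbf T^\mu(V)-\delta)$ with $\mathbf L(r)=\min(1,\max(0,r))$; and $\mathbf T^*_\delta(V)=\sup_\mu\mathbf T^\mu_\delta(V)$ (pointwise). *)

(* Defs.v *)
From HB Require Import structures.
From mathcomp Require Import all_boot all_order all_algebra.
From mathcomp Require Import all_classical all_reals all_analysis measurable_realfun.
Set Implicit Arguments. Unset Strict Implicit. Unset Printing Implicit Defensive.
Import Order.TTheory GRing.Theory Num.Theory.
Local Open Scope classical_set_scope.
Local Open Scope ring_scope.

Definition dist_open {T : Type} {R : realType} (dist : T -> T -> R) (A : set T) :=
  forall x, A x -> exists2 e : R, 0 < e & [set y | dist x y < e] `<=` A.

Definition metric_borel {d} (T : measurableType d) (R : realType)
    (dist : T -> T -> R) : Prop :=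
  [/\ (forall x y, dist x y = 0 <-> x = y),
      (forall x y, dist x y = dist y x),
      (forall x y z, dist x z <= dist x y + dist y z) &
      @measurable d T = <<s dist_open dist >>].

Definition metric_measurable {d} (T : measurableType d) (R : realType) : Prop :=
  exists dist : T -> T -> R, metric_borel dist.

Definition polish_measurable {d} (T : measurableType d) (R : realType) : Prop :=
  exists dist : T -> T -> R,
    [/\ metric_borel dist,
        (forall u : nat -> T,
            (forall e : R, 0 < e -> exists N, forall m n, (N <= m)%N -> (N <= n)%N ->
                 dist (u m) (u n) < e) ->
            exists l, forall e : R, 0 < e -> exists N, forall n, (N <= n)%N ->
                 dist (u n) l < e) &
        (exists D : set T, countable D /\
            forall x (e : R), 0 < e -> exists2 y, D y & dist x y < e)].

(* A is measurable for the completion of every probability measure on T *)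
Definition univ_measurable_set {d} {T : measurableType d} (R : realType)
    (A : set T) : Prop :=
  forall P : probability T R,
    exists2 B, measurable B & P.-negligible ((A `\` B) `|` (B `\` A)).

Definition univ_measurable_fun {d} {T : measurableType d} (R : realType)
    (f : T -> \bar R) : Prop :=
  forall B : set (\bar R), measurable B -> univ_measurable_set R (f @^-1` B).

(* A (randomized, stationary) policy mu : X x Q -> P(U) is universally
   measurable when, for every q, and every measurable B of U,
   x |-> mu(x,q)(B) is universally measurable (P(U) carries the
   sigma-algebra generated by the evaluation maps). *)
Definition univ_measurable_policy {dX dU} (X : measurableType dX)
    (U : measurableType dU) (Q : Type) (R : realType)
    (mu : X -> Q -> probability U R) : Prop :=
  forall (q : Q) (B : set U), measurable B ->
    univ_measurable_fun (fun x : X => mu x q B).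

Definition clip01 {R : realType} (r : R) : R := Num.min 1 (Num.max 0 r).

Section operators.
Context {dX dU : measure_display} (X : measurableType dX) (U : measurableType dU)
  (R : realType) (AP Q : finType)
  (t : R.-pker (X * U)%type ~> X)
  (lab : X -> {set AP})                (* the map  L o h  *)
  (F : {set Q}) (tau : Q -> {set AP} -> Q).

(* T^mu(V)(x,q) = int max{1_F(q'), V(x',q')} tbar(dx' x {q'} | x, q, mu(x,q)),
   the kernel tbar under the randomized input mu(x,q) being the mixture
   int_U tbar(. | x, q, u) mu(x,q)(du). *)
Definition Tmu (mu : X -> Q -> probability U R) (V : X -> Q -> R) : X -> Q -> R :=
  fun x q => fine (\int[mu x q]_u
     \int[t (x, u)]_x' (Num.max ((tau q (lab x') \in F)%:R)
                               (V x' (tau q (lab x'))))%:E)%E.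

Definition Tmu_delta (delta : R) (mu : X -> Q -> probability U R)
    (V : X -> Q -> R) : X -> Q -> R :=
  fun x q => clip01 (Tmu mu V x q - delta).

Definition Tstar_delta (delta : R) (V : X -> Q -> R) : X -> Q -> R :=
  fun x q => sup [set Tmu_delta delta mu V x q |
                   mu in [set mu | univ_measurable_policy mu]].

End operators.

(* Main.v *)
Require Import Defs.
From mathcomp Require Import all_boot all_order all_algebra.
From mathcomp Require Import all_classical all_reals all_analysis measurable_realfun.
From mathcomp Require Import lra.
Import Order.TTheory GRing.Theory Num.Theory numFieldNormedType.Exports.
Local Open Scope classical_set_scope.
Local Open Scope ring_scope.
Import HBNNSimple.
Set Implicit Arguments. Unset Strict Implicit.

Lemma LEM d (T : measurableType d) (R : realType) (mu : {measure set T -> \bar R})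
  (f g : T -> \bar R) (c k : R) :
  (mu setT <= 1)%E -> 0 <= c -> 0 < k -> (forall x, 0 <= f x)%E -> (forall x, 0 <= g x)%E ->
  (forall x, f x <= c%:E + k%:E * g x)%E ->
  (\int[mu]_x f x <= c%:E + k%:E * \int[mu]_x g x)%E.
Proof.
move=> mu1 c0 k0 f0 g0 fg.
rewrite [X in (X <= _)%E]ge0_integralTE//; apply: ub_ereal_sup => _ [h /= hf <-].
pose h' := fun x => ((Num.max (h x - c) 0) / k)%:E.
have mh' : measurable_fun setT h'.
  apply/measurable_EFinP; apply: measurable_funM => //.
  apply: measurable_maxr => //; apply: measurable_funB => //.
have h'0 x : (0 <= h' x)%E by rewrite lee_fin divr_ge0 ?le_max ?lexx ?orbT// ltW.
have h'g x : (h' x <= g x)%E.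
  rewrite /h'; case: (leP (h x - c) 0) => hc.
    by rewrite mul0r g0.
  have := le_trans (hf x) (fg x).
  case E: (g x) => [r| |].
  - rewrite -EFinM -EFinD !lee_fin => H.
    by rewrite ler_pdivrMr // mulrC lerBlDl.
  - by rewrite leey.
  - by have := g0 x; rewrite E.
have -> : sintegral mu h = (\int[mu]_x (h x)%:E)%E by rewrite integralT_nnsfun.
apply: (@le_trans _ _ (\int[mu]_x (c%:E + k%:E * h' x))%E).
  apply: ge0_le_integral => //.
  - by move=> x _; rewrite lee_fin.
  - exact/measurable_EFinP.
  - apply: emeasurable_funD => //; apply: emeasurable_funM => //.
  - move=> x _; rewrite /h' -EFinM -EFinD lee_fin mulrC divfK ?gt_eqF//.
    by rewrite -lerBlDl le_max lexx.
rewrite ge0_integralD//; last 2 first.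
  - by move=> x _; rewrite mule_ge0 // lee_fin ltW.
  - apply: emeasurable_funM => //.
rewrite integral_cst // ge0_integralZl_EFin //; last exact: ltW.
apply: leeD.
  have := @lee_wpmul2l _ c%:E _ _ _ mu1; rewrite mule1; apply; by rewrite lee_fin.
apply: lee_wpmul2l; first by rewrite lee_fin ltW.
rewrite [X in (X <= _)%E]ge0_integralTE // [X in (_ <= X)%E]ge0_integralTE //.
apply: ereal_sup_le => _ [h2 /= h2f <-]; exists h2 => //= x.
exact: le_trans (h2f x) (h'g x).
Qed.

Lemma lim_ub (R : realType) (u : nat -> R) (l b : R) :
  u @ \oo --> l -> (forall n, u n <= b) -> l <= b.
Proof.
move=> ul ub; rewrite leNgt; apply/negP => bl.
have [N _ HN] := cvgr_gt l ul b bl.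
by have := HN N (leqnn N) => /=; rewrite ltNge ub.
Qed.

Lemma lim_lb (R : realType) (u : nat -> R) (l b : R) :
  u @ \oo --> l -> (forall n, b <= u n) -> b <= l.
Proof.
move=> ul ub; rewrite leNgt; apply/negP => bl.
have [N _ HN] := cvgr_lt l ul b bl.
by have := HN N (leqnn N) => /=; rewrite ltNge ub.
Qed.

Lemma clip01E (R : realType) (r : R) :
  clip01 r = if r <= 0 then 0 else if 1 <= r then 1 else r.
Proof.
rewrite /clip01; case: (leP r 0) => r0.
  by case: (leP 1 0) => //; rewrite ler10.
by case: (leP 1 r).
Qed.

Lemma clip01_01 (R : realType) (r : R) : 0 <= clip01 r <= 1.
Proof.
rewrite clip01E; case: (leP r 0) => r0; first by rewrite lexx ler01.
by case: (leP 1 r) => r1; apply/andP; split; lra.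
Qed.

Lemma clip01_ge (R : realType) (r : R) : r <= 1 -> r <= clip01 r.
Proof.
rewrite clip01E => ?; case: (leP r 0) => r0 //; case: (leP 1 r) => r1 //; lra.
Qed.

Lemma clip01_pos (R : realType) (r : R) : r <= 1 -> 0 < clip01 r -> clip01 r = r.
Proof.
rewrite clip01E => ?; case: (leP r 0) => r0; first by rewrite ltxx.
case: (leP 1 r) => r1 // _; apply/eqP; rewrite eq_le; apply/andP; split; lra.
Qed.

Lemma clip01_mono (R : realType) (r s : R) : r <= s -> clip01 r <= clip01 s.
Proof.
rewrite !clip01E => rs.
case: (leP r 0) => r0; case: (leP s 0) => s0; case: (leP 1 r) => r1;
  case: (leP 1 s) => s1; lra.
Qed.

Section S.
Context {dX dU : measure_display} (X : measurableType dX) (U : measurableType dU)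
  (R : realType) (AP Q : finType)
  (t : R.-pker (X * U)%type ~> X) (lab : X -> {set AP})
  (F : {set Q}) (tau : Q -> {set AP} -> Q).

Definition b01 (V : X -> Q -> R) := forall x q, 0 <= V x q <= 1.

Definition Amax (V : X -> Q -> R) q y : R :=
  Num.max ((tau q (lab y) \in F)%:R) (V y (tau q (lab y))).

Lemma Amax_01 V q y : b01 V -> 0 <= Amax V q y <= 1.
Proof.
move=> bV; rewrite /Amax; have /andP[V0 V1] := bV y (tau q (lab y)).
apply/andP; split; first by rewrite le_max V0 orbT.
by rewrite ge_max V1 andbT; case: (_ \in _).
Qed.

Lemma I2 (mu : probability U R) x (a b : X -> R) c k :
  0 <= c -> 0 < k -> (forall y, 0 <= a y) -> (forall y, 0 <= b y) ->
  (forall y, a y <= c + k * b y) ->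
  (\int[mu]_u \int[t (x, u)]_y (a y)%:E <=
     c%:E + k%:E * \int[mu]_u \int[t (x, u)]_y (b y)%:E)%E.
Proof.
move=> c0 k0 a0 b0 ab.
apply: LEM => //; first by apply: probability_le1.
- by move=> u; apply: integral_ge0 => y _; rewrite lee_fin.
- by move=> u; apply: integral_ge0 => y _; rewrite lee_fin.
- move=> u; apply: LEM => //; first by rewrite prob_kernel.
  all: try by move=> y; rewrite ?lee_fin -?EFinM -?EFinD ?lee_fin.
Qed.

Lemma I2_01 (mu : probability U R) x (a : X -> R) :
  (forall y, 0 <= a y <= 1) ->
  (0 <= \int[mu]_u \int[t (x, u)]_y (a y)%:E <= 1)%E.
Proof.
move=> a01; apply/andP; split.
  apply: integral_ge0 => u _; apply: integral_ge0 => y _.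
  by rewrite lee_fin; case/andP: (a01 y).
have := I2 mu x (a:=a) (b:=fun _ => 0) (c:=1) (k:=1) ler01 ltr01.
rewrite (@integral0_eq _ _ _ _ _ (fun u => \int[t (x, u)]_y (0:R)%:E)%E); last first.
  by move=> u _; apply: integral0_eq.
rewrite mule0 adde0; apply.
- by move=> y; case/andP: (a01 y).
- by move=> y; rewrite lexx.
- by move=> y; rewrite mulr0 addr0; case/andP: (a01 y).
Qed.

Lemma fin01 (e : \bar R) : (0 <= e <= 1)%E -> e \is a fin_num.
Proof.
case/andP=> e0 e1; rewrite ge0_fin_numE //.
exact: le_lt_trans e1 (ltry _).
Qed.

Lemma Tmu_01 mu V x q : b01 V -> 0 <= Tmu t lab F tau mu V x q <= 1.
Proof.
move=> bV; rewrite /Tmu.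
have := I2_01 (mu x q) x (a:=Amax V q) (fun y => Amax_01 q y bV).
rewrite /Amax => H; have Hf := fin01 H.
by rewrite -(fineK Hf) !lee_fin in H.
Qed.

Lemma Tmu_key mu V W x q c k : b01 V -> b01 W -> 0 <= c -> 0 < k ->
  (forall y, Amax V q y <= c + k * Amax W q y) ->
  Tmu t lab F tau mu V x q <= c + k * Tmu t lab F tau mu W x q.
Proof.
move=> bV bW c0 k0 H; rewrite /Tmu.
have HV := I2_01 (mu x q) x (a:=Amax V q) (fun y => Amax_01 q y bV).
have HW := I2_01 (mu x q) x (a:=Amax W q) (fun y => Amax_01 q y bW).
have := I2 (mu x q) x (a:=Amax V q) (b:=Amax W q) c0 k0.
move: HV HW; rewrite /Amax => HV HW.
have FV := fin01 HV; have FW := fin01 HW.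
rewrite -(fineK FV) -(fineK FW) -EFinM -EFinD lee_fin; apply.
- by move=> y; case/andP: (Amax_01 q y bV).
- by move=> y; case/andP: (Amax_01 q y bW).
- exact: H.
Qed.

Lemma Tmu_mono mu V W x q : b01 V -> b01 W -> (forall x q, V x q <= W x q) ->
  Tmu t lab F tau mu V x q <= Tmu t lab F tau mu W x q.
Proof.
move=> bV bW VW; rewrite -[X in _ <= X]add0r -[X in _ <= 0 + X]mul1r.
apply: Tmu_key => //.
by move=> y; rewrite add0r mul1r /Amax ge_max !le_max lexx VW !orbT.
Qed.

Lemma Tmud_01 delta mu V x q : 0 <= Tmu_delta t lab F tau delta mu V x q <= 1.
Proof. exact: clip01_01. Qed.

Lemma Tmud_mono delta mu V W x q : b01 V -> b01 W -> (forall x q, V x q <= W x q) ->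
  Tmu_delta t lab F tau delta mu V x q <= Tmu_delta t lab F tau delta mu W x q.
Proof.
move=> bV bW VW; apply: clip01_mono; rewrite lerD2r; exact: Tmu_mono.
Qed.

Variables (delta : R) (mu0 : X -> Q -> probability U R)
  (um0 : univ_measurable_policy mu0).

Let Eset V x q := [set Tmu_delta t lab F tau delta mu V x q |
                   mu in [set mu | univ_measurable_policy mu]].

Lemma Eset_sup V x q : has_sup (Eset V x q).
Proof.
split; first by exists (Tmu_delta t lab F tau delta mu0 V x q); exists mu0.
by exists 1 => _ [mu _ <-]; case/andP: (Tmud_01 delta mu V x q).
Qed.

Lemma Tstar_ge mu V x q : univ_measurable_policy mu ->
  Tmu_delta t lab F tau delta mu V x q <= Tstar_delta t lab F tau delta V x q.
Proof. by move=> um; apply: sup_upper_bound; [exact: Eset_sup|exists mu]. Qed.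

Lemma Tstar_01 V x q : 0 <= Tstar_delta t lab F tau delta V x q <= 1.
Proof.
apply/andP; split.
  apply: le_trans (Tstar_ge V x q um0); by case/andP: (Tmud_01 delta mu0 V x q).
apply: ge_sup; first by exists (Tmu_delta t lab F tau delta mu0 V x q); exists mu0.
by move=> _ [mu _ <-]; case/andP: (Tmud_01 delta mu V x q).
Qed.

Lemma Tstar_mono V W x q : b01 V -> b01 W -> (forall x q, V x q <= W x q) ->
  Tstar_delta t lab F tau delta V x q <= Tstar_delta t lab F tau delta W x q.
Proof.
move=> bV bW VW; apply: ge_sup.
  by exists (Tmu_delta t lab F tau delta mu0 V x q); exists mu0.
move=> _ [mu um <-]; apply: le_trans (Tstar_ge W x q um).
exact: Tmud_mono.
Qed.

End S.

Lemma lim_lb_ev (R : realType) (u : nat -> R) (l b : R) (N : nat) :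
  u @ \oo --> l -> (forall n, (N <= n)%N -> b <= u n) -> b <= l.
Proof.
move=> ul ub; rewrite leNgt; apply/negP => bl.
have [M _ HM] := cvgr_lt l ul b bl.
by have := HM (maxn M N) (leq_maxl M N) => /=; rewrite ltNge ub // leq_maxr.
Qed.

Lemma arith_step (R : realType) (k delta V Wn TA TB m g : R) :
  0 < k -> 0 < delta -> V <= TA - delta -> TB - delta <= Wn ->
  TA + TA * k <= m + k * TB -> m - delta <= g ->
  V + k * (V - Wn) <= g.
Proof.
move=> k0 d0 hV hW key mg.
have f1 := ler_wpM2l (ltW k0) hV.
have f2 := ler_wpM2l (ltW k0) hW.
rewrite !mulrBr in f1 f2.
rewrite [TA * k]mulrC in key.
rewrite mulrBr; lra.
Qed.

Lemma arith_le1 (R : realType) (a d : R) : a <= 1 -> 0 < d -> a - d <= 1.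
Proof. move=> *; lra. Qed.

Lemma arith_fin (R : realType) (k V W ld d : R) : 0 <= V -> 0 < d -> k <= ld ->
  V + k * (V - W) <= Num.max (1 + k - ld) (1 - d) -> k * (V - W) <= 1.
Proof. by move=> ? ? ?; case: (leP (1 + k - ld) (1 - d)) => ? ?; lra. Qed.

Lemma max1E (R : realType) (z : R) : z <= 1 -> Num.max 1 z = 1.
Proof. by move=> z1; case: (leP 1 z) => // h; apply/eqP; rewrite eq_le z1 h. Qed.

Lemma max0E (R : realType) (z : R) : 0 <= z -> Num.max 0 z = z.
Proof. by move=> z0; case: (leP 0 z) => // h; apply/eqP; rewrite eq_le z0 ltW. Qed.

Unset Implicit Arguments.
Theorem theorem1
  (R : realType)
  (dX dU dY : measure_display)
  (X : measurableType dX) (U : measurableType dU) (Y : measurableType dY)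
  (hX : polish_measurable X R) (hU : polish_measurable U R)
  (hY : metric_measurable Y R)
  (x0 : X)
  (t : R.-pker (X * U)%type ~> X)
  (h : X -> Y) (mh : measurable_fun setT h)
  (AP : finType) (L : Y -> {set AP})
  (mL : forall s : {set AP}, measurable (L @^-1` [set s]))
  (Q : finType) (q0 : Q) (F : {set Q}) (tau : Q -> {set AP} -> Q)
  (delta : R) (delta_gt0 : 0 < delta)
  (Vinf : X -> Q -> R)
  (hVinf : forall x q,
     (fun l => iter l (Tstar_delta t (fun x => L (h x)) F tau delta)
                      (fun _ _ => 0) x q) @ \oo --> Vinf x q)
  (mustar : X -> Q -> probability U R)
  (mustar_um : univ_measurable_policy mustar)
  (mustar_opt : Tmu_delta t (fun x => L (h x)) F tau delta mustar Vinf
                = Tstar_delta t (fun x => L (h x)) F tau delta Vinf) :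
  forall x q,
    (fun l => iter l (Tmu_delta t (fun x => L (h x)) F tau delta mustar)
                     (fun _ _ => 0) x q) @ \oo --> Vinf x q.
Proof.
set lab := (fun x => L (h x)) in hVinf mustar_opt *.
set S := Tstar_delta t lab F tau delta in hVinf mustar_opt *.
set T := Tmu_delta t lab F tau delta mustar in mustar_opt *.
pose Vl l := iter l S (fun _ _ => 0).
pose Wl l := iter l T (fun _ _ => 0).
have b0 : b01 (fun (_ : X) (_ : Q) => (0 : R)) by move=> *; rewrite lexx ler01.
have bV l : b01 (Vl l).
  case: l => [//|l] x q; exact: Tstar_01 mustar_um _ x q.
have bW l : b01 (Wl l).
  case: l => [//|l] x q; exact: Tmud_01.
have hVinc l x q : Vl l x q <= Vl l.+1 x q.
  elim: l x q => [|l IH] x q.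
    by case/andP: (Tstar_01 t lab F tau delta mustar_um (fun _ _ => 0) x q).
  exact: (Tstar_mono t lab F tau delta mustar_um x q (bV l) (bV l.+1) IH).
have hVle l x q : Vl l x q <= Vinf x q.
  apply: (@lim_lb_ev _ (fun n => Vl n x q) _ _ l (hVinf x q)) => n ln.
  have : {homo (fun n => Vl n x q) : n m / (n <= m)%N >-> n <= m}.
    by apply/nondecreasing_seqP => m; exact: hVinc.
  by apply.
have bVinf : b01 Vinf.
  move=> x q; apply/andP; split; first exact: (hVle 0%N).
  by apply: (lim_ub (hVinf x q)) => n; case/andP: (bV n x q).
have hVS x q : Vinf x q <= S Vinf x q.
  apply: (lim_ub (hVinf x q)) => n.
  apply: le_trans (hVinc n x q) _.
  exact: (Tstar_mono t lab F tau delta mustar_um x q (bV n) bVinf (hVle n)).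
have hVT x q : Vinf x q <= T Vinf x q by rewrite mustar_opt; exact: hVS.
have hWV l x q : Wl l x q <= Vl l x q.
  elim: l x q => [|l IH] x q; first by rewrite lexx.
  apply: le_trans (Tstar_ge t lab F tau delta mustar_um _ x q mustar_um).
  exact: (Tmud_mono t lab F tau delta mustar x q (bW l) (bV l) IH).
have hWinf l x q : Wl l x q <= Vinf x q := le_trans (hWV l x q) (hVle l x q).
have claim (k : R) (k0 : 0 < k) : forall l x q, Wl l x q < Vinf x q ->
    Vinf x q + k * (Vinf x q - Wl l x q) <=
      Num.max (1 + k - l%:R * delta) (1 - delta).
  elim=> [|l IH] x q WV.
    have -> : Wl 0%N x q = 0 by [].
    case/andP: (bVinf x q) => V0 V1.
    have := ler_wpM2l (ltW k0) V1.
    rewrite mul0r subr0 subr0 mulr1 => kV.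
    by case: (leP (1 + k) (1 - delta)) => ?; lra.
  have k1 : 0 < 1 + k by lra.
  pose m := Num.max (1 + k - l%:R * delta) 1.
  have mg : m - delta <= Num.max (1 + k - l.+1%:R * delta) (1 - delta).
    rewrite /m mulrSr mulrDl mul1r.
    by case: (leP (1 + k - l%:R * delta) 1) => ?;
       case: (leP (1 + k - (l%:R * delta + delta)) (1 - delta)) => ?; lra.
  have m1 : 1 <= m by rewrite /m le_max lexx orbT.
  have mIH : Num.max (1 + k - l%:R * delta) (1 - delta) <= m.
    rewrite /m; case: (leP (1 + k - l%:R * delta) 1) => ?;
       case: (leP (1 + k - l%:R * delta) (1 - delta)) => ?; lra.
  have E z : m / (1 + k) + k / (1 + k) * z = (m + k * z) / (1 + k).
    by rewrite mulrAC -mulrDl.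
  have c0' : 0 <= m / (1 + k) by rewrite divr_ge0 // ?ltW //; lra.
  have k0' : 0 < k / (1 + k) by rewrite divr_gt0.
  have Hpt : forall y, Amax lab F tau Vinf q y <=
      m / (1 + k) + k / (1 + k) * Amax lab F tau (Wl l) q y.
    move=> y; rewrite E ler_pdivlMr // /Amax.
    case/andP: (bVinf y (tau q (lab y))) => V0 V1.
    case/andP: (bW l y (tau q (lab y))) => W0 W1.
    have WVy := hWinf l y (tau q (lab y)).
    case: (tau q (lab y) \in F) => /=.
      rewrite !max1E //.
      by lra.
    rewrite !max0E //.
    case: (ltP (Wl l y (tau q (lab y))) (Vinf y (tau q (lab y)))) => lt.
      have := IH _ _ lt; lra.
    have := ler_wpM2l (ltW k0) lt; lra.
  have := Tmu_key t mustar x bVinf (bW l) c0' k0' Hpt.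
  rewrite E ler_pdivlMr // => key.
  have TA01 := Tmu_01 t lab F tau mustar x q bVinf.
  have TB01 := Tmu_01 t lab F tau mustar x q (bW l).
  move: key TA01 TB01.
  set TA := Tmu t lab F tau mustar Vinf x q.
  set TB := Tmu t lab F tau mustar (Wl l) x q.
  move=> key /andP[TA0 TA1] /andP[TB0 TB1].
  have hV := hVT x q.
  have eW : Wl l.+1 x q = clip01 (TB - delta) by [].
  have eT : T Vinf x q = clip01 (TA - delta) by [].
  rewrite eW in WV *; rewrite eT in hV.
  have /andP[c0 _] := clip01_01 (TB - delta).
  have TBd := arith_le1 TB1 delta_gt0.
  have cge := clip01_ge TBd.
  have Vpos : 0 < clip01 (TA - delta) by apply: le_lt_trans c0 (lt_le_trans WV hV).
  have TAd := arith_le1 TA1 delta_gt0.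
  rewrite (clip01_pos TAd Vpos) in hV.
  move: WV cge; set Wn := clip01 (TB - delta) => WV cge.
  rewrite mulrDr mulr1 in key.
  exact: arith_step k0 delta_gt0 hV cge key mg.
move=> x q.
apply/cvgrPdist_le => e e0.
have k0 : 0 < e^-1 by rewrite invr_gt0.
exists (Num.truncn (e^-1 / delta)).+1 => // l /= Nl.
have lk : e^-1 <= l%:R * delta.
  rewrite -ler_pdivrMr //; apply/ltW; apply: lt_le_trans (truncnS_gt _) _.
  by rewrite ler_nat.
have hWl := hWinf l x q.
rewrite ger0_norm ?subr_ge0 //.
case: (ltP (Wl l x q) (Vinf x q)) => [lt|ge]; last by apply: le_trans (ltW e0); rewrite subr_le0; exact: ge.
have := claim _ k0 l x q lt.
case/andP: (bVinf x q) => V0 V1 H.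
have H2 : e^-1 * (Vinf x q - Wl l x q) <= 1.
  exact: arith_fin V0 delta_gt0 lk H.
by rewrite -(ler_pM2l k0) mulVf ?gt_eqF //; exact: H2.
Qed.
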